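(* Let $k$ be a field containing all $m$-th roots of unity, with $p\nmid m$ if $\operatorname{char}(k)=p>0$. Let $\mathcal A$ be a perfect $k$-algebra, $S$ a commutative associative unital $k$-algebra, $\sigma_1\in\operatorname{Aut}(\mathcal A)$, $\sigma_2\in\operatorname{Aut}(S)$ with $\sigma_1^m=\mathrm{id}$, $\sigma_2^m=\mathrm{id}$, suppose $S_{\bar 1}$ contains an invertible element $u$ of $S$, and suppose $\psi:C(\mathcal A)\otimes S\to C(\mathcal A\otimes S)$, $\gamma\otimes s\mapsto\gamma\otimes L_s$, is an isomorphism. Let $d\in\mathcal D((\mathcal A\otimes S)_{\bar 0})$ and let $D\in\mathcal D(\mathcal A\otimes S)_{\bar 0}$ satisfy $D|_{(\mathcal A\otimes S)_{\bar 0}}=d$. Let $\bar i,\bar s\in\mathbb Z_m$, $a_{\bar i}\in\mathcal A_{\bar i}$, $b_{-\bar i+\bar s}\in S_{-\bar i+\bar s}$. Then: (a) for every integer $n$ with $n\cdot 1_k\neq 0$, $$D(a_{\bar i}\otimes b_{-\bar i+\bar s})=d\big(a_{\bar i}\otimes u^{-\epsilon(\bar s)}b_{-\bar i+\bar s}\big)u^{\epsilon(\bar s)}+\epsilon(\bar s)(mn)^{-1}u^{\epsilon(\bar i)}\Big[u^{-mn}d\big(a_{\bar i}\otimes u^{-\epsilon(\bar i)+mn}\big)-d\big(a_{\bar i}\otimes u^{-\epsilon(\bar i)}\big)\Big]b_{-\bar i+\bar s};$$ in particular, if $\operatorname{char}(k)=0$ this holds for every nonzero integer $n$. (b) if $\operatorname{char}(k)=p>0$,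 then $D(a_{\bar i}\otimes b_{-\bar i+\bar s})=d(a_{\bar i}\otimes u^{-pr}b_{-\bar i+\bar s})u^{pr}$, where $r=\epsilon(\bar s\bar p^{-1})$ and $\bar p$ is the image of $p$ in $\mathbb Z_m$.
   Context: Algebras are $k$-vector spaces with bilinear product (not necessarily associative); perfect means $\mathcal A\mathcal A=\mathcal A$; $C(\mathcal A)$ is the centroid $\{\gamma\in\operatorname{End}(\mathcal A)\mid\gamma(xy)=\gamma(x)y=x\gamma(y)\}$; $\mathcal D$ denotes derivations. Fix a primitive $m$-th root of unity $\omega$; $\mathcal A_{\bar i}=\{a\mid\sigma_1(a)=\omega^ia\}$, $S_{\bar i}=\{s\mid\sigma_2(s)=\omega^is\}$, $(\mathcal A\otimes S)_{\bar i}=\sum_{\bar j}\mathcal A_{\bar i-\bar j}\otimes S_{\bar j}$, and $\mathcal D(\mathcal A\otimes S)_{\bar 0}$ is the set of derivations of $\mathcal A\otimes S$ mapping each $(\mathcal A\otimes S)_{\bar j}$ into itself. For $\bar i\in\mathbb Z_m$, $\epsilon(\bar i)$ is the unique representative of $\bar i$ in $\{0,1,\dots,m-1\}$. $\mathcal A\otimes S$ is an $S$-bimodule by $s'(a\otimes s)=(a\otimes s)s'=a\otimes ss'$; expressions like $x\,s$ or $s\,x$ for $x\in\mathcal A\otimes S$, $s\in S$ denote this action. *)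

(* Defs.v *)
From HB Require Import structures.
From mathcomp Require Import all_boot all_order all_algebra.
Set Implicit Arguments. Unset Strict Implicit. Unset Printing Implicit Defensive.
Import Order.TTheory GRing.Theory Num.Theory.
Local Open Scope ring_scope.

Section Defs.
Variable k : fieldType.

Definition bilin (U V W : lmodType k) (f : U -> V -> W) : Prop :=
  (forall v, linear (fun u => f u v)) /\ (forall u, linear (f u)).

Definition is_tensor (U V T : lmodType k) (t : U -> V -> T) : Prop :=
  bilin t /\
  forall (W : lmodType k) (f : U -> V -> W), bilin f ->
    (exists g : T -> W, linear g /\ forall u v, g (t u v) = f u v) /\
    (forall g1 g2 : T -> W, linear g1 -> linear g2 ->
       (forall u v, g1 (t u v) = f u v) -> (forall u v, g2 (t u v) = f u v) ->
       g1 =1 g2).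

Definition centroid (V : lmodType k) (mul : V -> V -> V) (g : V -> V) : Prop :=
  linear g /\ forall x y, g (mul x y) = mul (g x) y /\ g (mul x y) = mul x (g y).

Definition perfect (V : lmodType k) (mul : V -> V -> V) : Prop :=
  forall a : V, exists n (x y : 'I_n -> V), a = \sum_(i < n) mul (x i) (y i).

Definition alg_aut (V : lmodType k) (mul : V -> V -> V) (f : V -> V) : Prop :=
  linear f /\ bijective f /\ forall x y, f (mul x y) = mul (f x) (f y).

Definition ualg_aut (S : comUnitAlgType k) (f : S -> S) : Prop :=
  linear f /\ bijective f /\ f 1 = 1 /\ forall x y, f (x * y) = f x * f y.

(* eigen-component  V_z = { v | f v = w^z v }  (z taken modulo the order of w) *)
Definition eigc (V : lmodType k) (f : V -> V) (w : k) (z : int) (v : V) : Prop :=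
  f v = (w ^ z) *: v.

(* graded component (A (x) S)_j = sum_l A_{j-l} (x) S_l *)
Definition tgr (A : lmodType k) (S : comUnitAlgType k) (T : lmodType k)
  (tens : A -> S -> T) (s1 : A -> A) (s2 : S -> S) (w : k) (j : int) (x : T) : Prop :=
  exists n (f : 'I_n -> A) (g : 'I_n -> S) (e : 'I_n -> int),
    x = \sum_(i < n) tens (f i) (g i) /\
    forall i, eigc s1 w (j - e i) (f i) /\ eigc (s2 : S -> S) w (e i) (g i).

Definition derivation (V : lmodType k) (mul : V -> V -> V) (D : V -> V) : Prop :=
  linear D /\ forall x y, D (mul x y) = mul (D x) y + mul x (D y).

(* derivation of the subalgebra carried by P (d only matters on P) *)
Definition derivation_on (V : lmodType k) (mul : V -> V -> V) (P : V -> Prop)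
  (d : V -> V) : Prop :=
  (forall x, P x -> P (d x)) /\
  (forall a x y, P x -> P y -> d (a *: x + y) = a *: d x + d y) /\
  (forall x y, P x -> P y -> d (mul x y) = mul (d x) y + mul x (d y)).

End Defs.

(* Main.v *)
Require Import Defs.
From HB Require Import structures.
From mathcomp Require Import all_boot all_order all_algebra.
From mathcomp Require Import ring.
Import Order.TTheory GRing.Theory Num.Theory.
Local Open Scope ring_scope.
Set Implicit Arguments. Unset Strict Implicit.

Section Lin.
Variables (k : fieldType) (U W : lmodType k) (f : U -> W) (Hf : linear f).
Lemma linD x y : f (x + y) = f x + f y.
Proof. by have := Hf 1 x y; rewrite !scale1r. Qed.
Lemma lin0 : f 0 = 0.
Proof. have := linD 0 0; rewrite addr0 => /esym/eqP; rewrite -subr_eq0 addrK => /eqP //. Qed.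
Lemma linZ a x : f (a *: x) = a *: f x.
Proof. by have := Hf a x 0; rewrite lin0 !addr0. Qed.
Lemma linN x : f (- x) = - f x.
Proof. by rewrite -scaleN1r linZ scaleN1r. Qed.
Lemma linB x y : f (x - y) = f x - f y.
Proof. by rewrite linD linN. Qed.
End Lin.

Lemma lin_comp (k : fieldType) (U V W : lmodType k) (f : V -> W) (g : U -> V) :
  linear f -> linear g -> linear (fun x => f (g x)).
Proof. by move=> Hf Hg a x y /=; rewrite (Hg a x y) (Hf a). Qed.

Lemma tens_ext (k : fieldType) (U V T W : lmodType k) (t : U -> V -> T)
  (Ht : is_tensor t) (g1 g2 : T -> W) : linear g1 -> linear g2 ->
  (forall u v, g1 (t u v) = g2 (t u v)) -> g1 =1 g2.
Proof.
move=> H1 H2 Heq; case: Ht => [[Hl Hr] Hu].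
have Hb : bilin (fun u v => g1 (t u v)).
  by split => [v|u]; apply: lin_comp.
case: (Hu W _ Hb) => _ Huniq; apply: Huniq => //.
Qed.
Theorem lemma4p4
  (k : fieldType) (m : nat) (w : k)
  (Hw : m.-primitive_root w)
  (Hchar : forall p : nat, p \in [pchar k] -> ~~ (p %| m)%N)
  (* the algebra A *)
  (A : lmodType k) (mulA : A -> A -> A) (HmulA : bilin mulA) (Hperf : perfect mulA)
  (* the commutative associative unital algebra S *)
  (S : comUnitAlgType k)
  (* automorphisms of order dividing m *)
  (s1 : A -> A) (Hs1 : alg_aut mulA s1) (Hs1m : forall a, iter m s1 a = a)
  (s2 : S -> S) (Hs2 : ualg_aut s2) (Hs2m : forall b, iter m s2 b = b)
  (u : S) (Hu : u \is a GRing.unit) (Hu1 : eigc s2 w 1 u)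
  (* the tensor product T = A (x) S, its product and its S-module structure *)
  (T : lmodType k) (tens : A -> S -> T) (Htens : is_tensor tens)
  (mulT : T -> T -> T) (HmulT : bilin mulT)
  (HmulTt : forall a a' b b', mulT (tens a b) (tens a' b') = tens (mulA a a') (b * b'))
  (smul : T -> S -> T) (Hsmul : forall b, linear (fun x => smul x b))
  (Hsmult : forall a b b', smul (tens a b) b' = tens a (b * b'))
  (* the centroid C(A), given as a k-space C embedded in the maps A -> A *)
  (C : lmodType k) (iota : C -> A -> A)
  (Hiota_lin : forall c1 c2 a (l : k), iota (l *: c1 + c2) a = l *: iota c1 a + iota c2 a)
  (Hiota_inj : forall c1 c2, iota c1 =1 iota c2 -> c1 = c2)
  (Hiota_cent : forall c, centroid mulA (iota c))
  (Hiota_surj : forall g, centroid mulA g -> exists c, iota c =1 g)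
  (* the tensor product C(A) (x) S and the map psi *)
  (CS : lmodType k) (tC : C -> S -> CS) (HtC : is_tensor tC)
  (psi : CS -> T -> T)
  (Hpsi_lin : forall x1 x2 t (l : k), psi (l *: x1 + x2) t = l *: psi x1 t + psi x2 t)
  (Hpsi_end : forall x, linear (psi x))
  (Hpsi_def : forall c b a b', psi (tC c b) (tens a b') = tens (iota c a) (b * b'))
  (* psi is an isomorphism onto C(A (x) S) *)
  (Hpsi_inj : forall x1 x2, psi x1 =1 psi x2 -> x1 = x2)
  (Hpsi_surj : forall g, centroid mulT g -> exists x, psi x =1 g)
  (* the derivations d and D *)
  (d : T -> T) (Hd : derivation_on mulT (tgr tens s1 s2 w 0) d)
  (D : T -> T) (HD : derivation mulT D)
  (HD0 : forall j x, tgr tens s1 s2 w j x -> tgr tens s1 s2 w j (D x))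
  (HDd : forall x, tgr tens s1 s2 w 0 x -> D x = d x)
  (* homogeneous elements; i, s are the representatives eps(i), eps(s) in {0..m-1} *)
  (i s : 'I_m) (a : A) (b : S)
  (Ha : eigc s1 w (i%:Z) a) (Hb : eigc s2 w (s%:Z - i%:Z) b) :
  let F (n : int) :=
    D (tens a b) =
      smul (d (tens a (u ^ (- s%:Z) * b))) (u ^ (s%:Z))
      + ((s%:R : k) / ((m%:Z * n)%:~R)) *:
          smul (smul (d (tens a (u ^ (- i%:Z + m%:Z * n)))) (u ^ (- (m%:Z * n)))
                - d (tens a (u ^ (- i%:Z))))
               (u ^ (i%:Z) * b) in
  (forall n : int, (n%:~R : k) != 0 -> F n) /\
  ([pchar k] =i pred0 -> forall n : int, n != 0 -> F n) /\
  (forall p : nat, p \in [pchar k] -> forall r : 'I_m, (r * p == s %[mod m])%N ->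
     D (tens a b) = smul (d (tens a (u ^- (p * r)%N * b))) (u ^+ (p * r)%N)).
Proof.
move=> F.
have Hm : (0 < m)%N by apply: prim_order_gt0 Hw.
have Hwm : w ^+ m = 1 by apply: prim_expr_order.
have w0 : w != 0.
  by apply/eqP => w0; move: Hwm; rewrite w0 expr0n eqn0Ngt Hm /= => /eqP; rewrite eq_sym oner_eq0.
have wmq : forall q : int, w ^ (m%:Z * q) = 1.
  by move=> q; rewrite -exprz_exp (_ : w ^ m%:Z = w ^+ m) // Hwm exp1rz.
have [[tl tr] _] := Htens.
have [mTl mTr] := HmulT.
have [DL Dmul] := HD.
have smul1 : forall x, smul x 1 = x.
  apply: (tens_ext Htens (g1 := fun x => smul x 1) (g2 := id)) => //.
  by move=> a0 b0; rewrite Hsmult mulr1.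
have smulA : forall x t t', smul (smul x t) t' = smul x (t * t').
  move=> x t t'; move: x; apply: (tens_ext Htens (g1 := fun x => smul (smul x t) t') (g2 := fun x => smul x (t * t'))).
  - exact: (lin_comp (Hsmul t') (Hsmul t)).
  - by [].
  by move=> a0 b0; rewrite !Hsmult mulrA.
have mulsl : forall x y t, mulT (smul x t) y = smul (mulT x y) t.
  move=> x y t; move: y; apply: (tens_ext Htens (g1 := mulT (smul x t)) (g2 := fun y => smul (mulT x y) t)).
  - exact: mTr.
  - exact: (lin_comp (Hsmul t) (mTr x)).
  move=> a' b'; move: x; apply: (tens_ext Htens (g1 := fun x => mulT (smul x t) (tens a' b')) (g2 := fun x => smul (mulT x (tens a' b')) t)).
  - exact: (lin_comp (mTl _) (Hsmul t)).
  - exact: (lin_comp (Hsmul t) (mTl _)).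
  by move=> a0 b0; rewrite !Hsmult !HmulTt Hsmult; congr tens; rewrite -!mulrA [t * _]mulrC.
have mulsr : forall x y t, mulT x (smul y t) = smul (mulT x y) t.
  move=> x y t; move: x; apply: (tens_ext Htens (g1 := fun x => mulT x (smul y t)) (g2 := fun x => smul (mulT x y) t)).
  - exact: mTl.
  - exact: (lin_comp (Hsmul t) (mTl y)).
  move=> a' b'; move: y; apply: (tens_ext Htens (g1 := fun y => mulT (tens a' b') (smul y t)) (g2 := fun y => smul (mulT (tens a' b') y) t)).
  - exact: (lin_comp (mTr _) (Hsmul t)).
  - exact: (lin_comp (Hsmul t) (mTr _)).
  by move=> a0 b0; rewrite !Hsmult !HmulTt Hsmult; congr tens; rewrite !mulrA.
have sD : forall x y t, smul (x + y) t = smul x t + smul y t by move=> x y t; exact: (linD (Hsmul t)).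
have sZ : forall (a0 : k) x t, smul (a0 *: x) t = a0 *: smul x t by move=> a0 x t; exact: (linZ (Hsmul t)).
have sN : forall x t, smul (- x) t = - smul x t by move=> x t; exact: (linN (Hsmul t)).
have sB : forall x y t, smul (x - y) t = smul x t - smul y t by move=> x y t; exact: (linB (Hsmul t)).
have DD : forall x y, D (x + y) = D x + D y by move=> x y; exact: (linD DL).
have DZ : forall (a0 : k) x, D (a0 *: x) = a0 *: D x by move=> a0 x; exact: (linZ DL).
have mTlB : forall x y z, mulT (x - y) z = mulT x z - mulT y z by move=> x y z; exact: (linB (mTl z)).
have mTrB : forall x y z, mulT z (x - y) = mulT z x - mulT z y by move=> x y z; exact: (linB (mTr z)).
pose phi := fun t x => D (smul x t) - smul (D x) t.
have phicent : forall t, centroid mulT (phi t).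
  move=> t; split.
    move=> a0 x y; rewrite /phi sD sZ !(DD, DZ) sD sZ.
    by rewrite scalerBr opprD addrACA.
  move=> x y; split.
    rewrite /phi -[smul (mulT x y) t]mulsl !Dmul sD -!mulsl mTlB.
    by rewrite opprD addrACA subrr addr0.
  rewrite /phi -[smul (mulT x y) t]mulsr !Dmul sD -!mulsr mTrB.
  by rewrite opprD addrACA subrr add0r.
have pc : forall X x t', psi X (smul x t') = smul (psi X x) t'.
  move=> X x t'; move: x; apply: (tens_ext Htens (g1 := fun x => psi X (smul x t')) (g2 := fun x => smul (psi X x) t')).
  - exact: (lin_comp (Hpsi_end X) (Hsmul t')).
  - exact: (lin_comp (Hsmul t') (Hpsi_end X)).
  move=> a0 b0; move: X; apply: (tens_ext HtC (g1 := fun X => psi X (smul (tens a0 b0) t')) (g2 := fun X => smul (psi X (tens a0 b0)) t')).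
  - by move=> l X1 X2 /=; exact: Hpsi_lin.
  - by move=> l X1 X2 /=; rewrite Hpsi_lin sD sZ.
  by move=> c b1; rewrite !Hsmult !Hpsi_def Hsmult mulrA.
have phic : forall t x t', phi t (smul x t') = smul (phi t x) t'.
  move=> t x t'; have [X HX] := Hpsi_surj _ (phicent t).
  by rewrite -!HX pc.
have prod : forall t t' x, phi (t * t') x = smul (phi t' x) t + smul (phi t x) t'.
  move=> t t' x.
  have e1 : D (smul (smul x t) t') = smul (phi t' x) t + smul (D (smul x t)) t'.
    by rewrite -phic /phi subrK.
  rewrite {1}/phi -smulA e1 -addrA; congr (_ + _).
  by rewrite /phi sB smulA.
have [g gdef] : exists g : T -> T, forall x, g x = smul (phi u x) u^-1 by exists (fun x => smul (phi u x) u^-1).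
have phiu : forall x, phi u x = smul (g x) u by move=> x; rewrite gdef smulA mulVr // smul1.
have gc : forall x t', g (smul x t') = smul (g x) t' by move=> x t'; rewrite !gdef phic !smulA mulrC.
have phi1 : forall x, phi 1 x = 0 by move=> x; rewrite /phi !smul1 subrr.
have pown : forall n x, phi (u ^+ n) x = n%:R *: smul (g x) (u ^+ n).
  elim=> [|n IH] x; first by rewrite expr0 phi1 scale0r.
  have -> : u ^+ n.+1 = u ^+ n * u by rewrite exprSr.
  rewrite prod IH phiu sZ !smulA [u * _]mulrC.
  by rewrite mulrS scalerDl scale1r.
have powz : forall (z : int) x, phi (u ^ z) x = z%:~R *: smul (g x) (u ^ z).
  case=> n x; first exact: pown.
  have -> : u ^ Negz n = (u ^+ n.+1)^-1 by [].
  set v := u ^+ n.+1.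
  have vU : v \is a GRing.unit by rewrite unitrX.
  have h0 : phi (v * v^-1) x = 0 by rewrite mulrV // phi1.
  rewrite prod pown sZ smulA mulrV // smul1 in h0.
  have e : phi v^-1 x = smul (smul (phi v^-1 x) v) v^-1 by rewrite smulA mulrV // smul1.
  rewrite e; move/eqP: h0; rewrite addr_eq0 => /eqP ->.
  rewrite sN sZ NegzE mulrNz scaleNr.
  by [].
have [_ [_ [s21 s2M]]] := Hs2.
have s2pown : forall n, s2 (u ^+ n) = w ^+ n *: u ^+ n.
  elim=> [|n IH]; first by rewrite !expr0 s21 scale1r.
  rewrite !exprSr s2M IH Hu1 (_ : w ^ 1 = w) ?expr1z //.
  by rewrite -scalerAl -scalerAr scalerA.
have s2pow : forall z : int, s2 (u ^ z) = w ^ z *: u ^ z.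
  case=> n; first exact: s2pown.
  have -> : u ^ Negz n = (u ^+ n.+1)^-1 by [].
  have -> : w ^ Negz n = (w ^+ n.+1)^-1 by [].
  have vU : u ^+ n.+1 \is a GRing.unit by rewrite unitrX.
  have wU : w ^+ n.+1 \is a GRing.unit by rewrite unitfE expf_neq0.
  have svU : s2 (u ^+ n.+1) \is a GRing.unit.
    by apply/unitrP; exists (s2 (u ^+ n.+1)^-1); rewrite -!s2M mulrV // mulVr // s21.
  have -> : s2 (u ^+ n.+1)^-1 = (s2 (u ^+ n.+1))^-1.
    by rewrite -[LHS](mulKr svU) -s2M mulrV // s21 mulr1.
  by rewrite s2pown invrZ.
have s2ub : forall z : int, s2 (u ^ z * b) = w ^ (z + (s%:Z - i%:Z)) *: (u ^ z * b).
  by move=> z; rewrite s2M s2pow Hb -scalerAl -scalerAr scalerA -expfzDr.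
have tgr0 : forall a' b' e, eigc s1 w (0 - e) a' -> eigc s2 w e b' -> tgr tens s1 s2 w 0 (tens a' b').
  move=> a' b' e H1 H2; exists 1%N, (fun _ => a'), (fun _ => b'), (fun _ => e).
  by split; [rewrite big_ord1 | move=> _; split].
have eigA : forall q : int, eigc s1 w (m%:Z * q + i%:Z) a.
  by move=> q; rewrite /eigc expfzDr // wmq mul1r.
have mR0 : (m%:R : k) != 0.
  apply/negP => hm; have [p Hp] := natf0_pchar Hm hm.
  by have := Hchar p Hp; rewrite (dvdn_pcharf Hp) hm.
have Fa : forall n : int, ((m%:Z * n)%:~R : k) != 0 -> F n.
  move=> n HN; rewrite /F.
  set N := m%:Z * n in HN *.
  set x0 := tens a (u ^ (- i%:Z)).
  have Hx0 : tgr tens s1 s2 w 0 x0.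
    apply: (tgr0 _ _ (- i%:Z)); last exact: s2pow.
    by rewrite sub0r opprK.
  have Hx1 : tgr tens s1 s2 w 0 (tens a (u ^ (- i%:Z + N))).
    apply: (tgr0 _ _ (- i%:Z + N)); last exact: s2pow.
    have -> : 0 - (- i%:Z + N) = m%:Z * (- n) + i%:Z by rewrite /N; ring.
    exact: eigA.
  have e1 : tens a (u ^ (- i%:Z + N)) = smul x0 (u ^ N) by rewrite Hsmult exprzDr.
  have eqA : d (tens a (u ^ (- i%:Z + N))) = N%:~R *: smul (g x0) (u ^ N) + smul (d x0) (u ^ N).
    by rewrite -HDd // e1 -powz -HDd // /phi subrK.
  have br : smul (d (tens a (u ^ (- i%:Z + N)))) (u ^ (- N)) - d x0 = N%:~R *: g x0.
    by rewrite eqA sD sZ !smulA -(exprzDr Hu) subrr expr0z !smul1 addrK.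
  rewrite br sZ scalerA divfK //.
  set y := tens a (u ^ (- s%:Z) * b).
  have Hy : tgr tens s1 s2 w 0 y.
    apply: (tgr0 _ _ (- s%:Z + (s%:Z - i%:Z))); last exact: s2ub.
    have -> : 0 - (- s%:Z + (s%:Z - i%:Z)) = m%:Z * 0 + i%:Z by ring.
    exact: eigA.
  have us : forall z : int, u ^ z * u ^ (- z) = 1.
    by move=> z; rewrite -(exprzDr Hu) subrr expr0z.
  have ey : tens a b = smul y (u ^ s%:Z).
    by rewrite /y Hsmult; congr tens; rewrite -[LHS]mulr1 -(us s%:Z); ring.
  have gy : smul (g y) (u ^ s%:Z) = smul (g x0) (u ^ i%:Z * b).
    have -> : y = smul x0 (u ^ i%:Z * (u ^ (- s%:Z) * b)).
      by rewrite /y /x0 Hsmult; congr tens; rewrite -[LHS]mul1r -(us i%:Z); ring.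
    rewrite gc smulA; congr smul.
    by rewrite -[RHS]mulr1 -(us s%:Z); ring.
  rewrite ey.
  have -> : D (smul y (u ^ s%:Z)) = phi (u ^ s%:Z) y + smul (D y) (u ^ s%:Z) by rewrite /phi subrK.
  by rewrite powz gy (HDd _ Hy) addrC.
have us : forall z : int, u ^ z * u ^ (- z) = 1.
  by move=> z; rewrite -(exprzDr Hu) subrr expr0z.
split.
  by move=> n Hn; apply: Fa; rewrite intrM mulf_neq0.
split.
  move=> H0 n Hn; apply: Fa; rewrite intrM mulf_neq0 //.
  case: n Hn => n0 Hn.
    rewrite -pmulrn ((pcharf0P k).1 H0).
    by move: Hn; apply: contra => /eqP ->.
  by rewrite NegzE mulrNz oppr_eq0 -pmulrn ((pcharf0P k).1 H0).
move=> p Hp r Hrs.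
rewrite exprnN.
set y := tens a (u ^ (- (p * r)%N%:Z) * b).
have Hy : tgr tens s1 s2 w 0 y.
  apply: (tgr0 _ _ (- (p * r)%N%:Z + (s%:Z - i%:Z))); last exact: s2ub.
  have hq : (p * r = (r * p) %/ m * m + s)%N.
    by rewrite mulnC {1}(divn_eq (r * p) m) (eqP Hrs) (modn_small (ltn_ord s)).
  have -> : 0 - (- (p * r)%N%:Z + (s%:Z - i%:Z)) = m%:Z * ((r * p) %/ m)%N%:Z + i%:Z.
    by rewrite hq PoszD PoszM; ring.
  exact: eigA.
have ey : tens a b = smul y (u ^ (p * r)%N%:Z).
  by rewrite /y Hsmult; congr tens; rewrite -[LHS]mul1r -(us (p * r)%N%:Z); ring.
rewrite ey.
have -> : D (smul y (u ^ (p * r)%N%:Z)) = phi (u ^ (p * r)%N%:Z) y + smul (D y) (u ^ (p * r)%N%:Z) by rewrite /phi subrK.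
rewrite powz -pmulrn natrM (pcharf0 Hp) mul0r scale0r add0r (HDd _ Hy).
by [].
Qed.
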